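(* Let $A\in\mathbb{C}^{n\times n}$ and $r\in\mathbb{R}$. Then the vertically projected Davis-Wielandt shell $\mathcal{W}_{\ge r}(A)$ is compact and convex.
   Context: The Davis-Wielandt shell of $A$ is $\mathcal{DW}(A)=\{(\mathrm{Re}\,x^*Ax,\ \mathrm{Im}\,x^*Ax,\ \|Ax\|^2): x\in\mathbb{C}^n,\|x\|=1\}\subset\mathbb{R}^3$. For $r\in\mathbb{R}$, the vertically projected DW-shell is $\mathcal{W}_{\ge r}(A)=\{(p,q)\in\mathbb{R}^2: (p,q,h^2)\in\mathcal{DW}(A)\text{ for some } h\ge r\}$ (it is empty when $r$ exceeds the largest singular value of $A$). *)

(* Defs.v *)
From HB Require Import structures.
From mathcomp Require Import all_boot all_order all_algebra.
From mathcomp Require Import complex.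
From mathcomp Require Import all_classical all_reals all_analysis.

Set Implicit Arguments.
Unset Strict Implicit.
Unset Printing Implicit Defensive.

Import Order.TTheory GRing.Theory Num.Theory.
Import numFieldNormedType.Exports.
Local Open Scope ring_scope.
Local Open Scope classical_set_scope.

Definition cvnorm (R : realType) (n : nat) (x : 'cV[R[i]]_n) : R :=
  Num.sqrt (\sum_(i < n) (complex.Re (x i ord0) ^+ 2 + complex.Im (x i ord0) ^+ 2)).

Definition qform (R : realType) (n : nat) (A : 'M[R[i]]_n) (x : 'cV[R[i]]_n)
  : R[i] :=
  ((map_mx (@conjc R) x)^T *m A *m x) ord0 ord0.

Definition DW (R : realType) (n : nat) (A : 'M[R[i]]_n) : set (R * R * R) :=
  [set t | exists x : 'cV[R[i]]_n, cvnorm x = 1 /\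
     t = (complex.Re (qform A x), complex.Im (qform A x), cvnorm (A *m x) ^+ 2)].

Definition W_ge (R : realType) (n : nat) (A : 'M[R[i]]_n) (r : R) : set (R * R) :=
  [set pq | exists h : R, r <= h /\ DW A (pq.1, pq.2, h ^+ 2)].

Definition convex2 (R : realType) (S : set (R * R)) : Prop :=
  forall (u v : R * R) (t : R), S u -> S v -> 0 <= t -> t <= 1 ->
    S ((1 - t) * u.1 + t * v.1, (1 - t) * u.2 + t * v.2).

(* Main.v *)
Require Import Defs.
From HB Require Import structures.
From mathcomp Require Import all_boot all_order all_algebra.
From mathcomp Require Import complex.
From mathcomp Require Import all_classical all_reals all_analysis.
From mathcomp Require Import ring lra.
Import Order.TTheory GRing.Theory Num.Theory.
Import numFieldNormedType.Exports.
Local Open Scope ring_scope.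
Local Open Scope classical_set_scope.


Notation CRe := (@complex.Re _).
Notation CIm := (@complex.Im _).
Section Cx.
Variable R : realType.
Implicit Types x y : R[i].
Lemma cReM x y : CRe (x * y) = CRe x * CRe y - CIm x * CIm y. Proof. by move: x y => [a b] [c d]. Qed.
Lemma cImM x y : CIm (x * y) = CRe x * CIm y + CIm x * CRe y. Proof. by move: x y => [a b] [c d]. Qed.
Lemma cReD x y : CRe (x + y) = CRe x + CRe y. Proof. by move: x y => [a b] [c d]. Qed.
Lemma cImD x y : CIm (x + y) = CIm x + CIm y. Proof. by move: x y => [a b] [c d]. Qed.
Lemma cReN x : CRe (- x) = - CRe x. Proof. by case: x. Qed.
Lemma cImN x : CIm (- x) = - CIm x. Proof. by case: x. Qed.
Lemma cReJ x : CRe (conjc x) = CRe x. Proof. by case: x. Qed.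
Lemma cImJ x : CIm (conjc x) = - CIm x. Proof. by case: x. Qed.
Lemma cReC (k : R) : CRe (k%:C)%C = k. Proof. by []. Qed.
Lemma cImC (k : R) : CIm (k%:C)%C = 0. Proof. by []. Qed.
Lemma cRe1 : CRe (1 : R[i]) = 1. Proof. by []. Qed.
Lemma cIm1 : CIm (1 : R[i]) = 0. Proof. by []. Qed.
Lemma cRe0 : CRe (0 : R[i]) = 0. Proof. by []. Qed.
Lemma cIm0 : CIm (0 : R[i]) = 0. Proof. by []. Qed.
Lemma cReCx (a b : R) : CRe (a +i* b)%C = a. Proof. by []. Qed.
Lemma cImCx (a b : R) : CIm (a +i* b)%C = b. Proof. by []. Qed.
Definition cxm (a b : R) : R[i] := Complex a b.
Lemma Recxm (a b : R) : CRe (cxm a b) = a. Proof. by []. Qed.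
Lemma Imcxm (a b : R) : CIm (cxm a b) = b. Proof. by []. Qed.
Lemma cxP x y : CRe x = CRe y -> CIm x = CIm y -> x = y.
Proof. by move: x y => [a b] [c d] /= -> ->. Qed.
End Cx.
Arguments cxm {R}.

Ltac cxsimp := rewrite ?(cReM, cImM, cReD, cImD, cReN, cImN, cReJ, cImJ, cReC, cImC, cRe1, cIm1, cRe0, cIm0, Recxm, Imcxm, cReCx, cImCx).
Ltac cxring := apply: cxP; cxsimp; ring.


Set Implicit Arguments.
Unset Strict Implicit.
Section Alg.
Variable R : realType.
Local Notation C := (R[i]).

Definition cr n (u w : 'cV[C]_n) : C := \sum_(i < n) conjc (u i ord0) * w i ord0.

Lemma ReSum (I : Type) (r : seq I) (P : pred I) (F : I -> C) :
  CRe (\sum_(i <- r | P i) F i) = \sum_(i <- r | P i) CRe (F i).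
Proof. by elim/big_rec2: _ => // i y1 y2 _ <-; rewrite cReD. Qed.
Lemma ImSum (I : Type) (r : seq I) (P : pred I) (F : I -> C) :
  CIm (\sum_(i <- r | P i) F i) = \sum_(i <- r | P i) CIm (F i).
Proof. by elim/big_rec2: _ => // i y1 y2 _ <-; rewrite cImD. Qed.

Lemma qformE n (A : 'M[C]_n) x : qform A x = cr x (A *m x).
Proof.
rewrite /qform /cr -mulmxA mxE; apply: eq_bigr => i _.
by rewrite !mxE.
Qed.

Lemma crDl n (u w z : 'cV[C]_n) a b :
  cr (a *: u + b *: w) z = conjc a * cr u z + conjc b * cr w z.
Proof.
rewrite /cr !mulr_sumr -big_split; apply: eq_bigr => i _; rewrite !mxE.
cxring.
Qed.

Lemma crDr n (u w z : 'cV[C]_n) a b :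
  cr z (a *: u + b *: w) = a * cr z u + b * cr z w.
Proof.
rewrite /cr !mulr_sumr -big_split; apply: eq_bigr => i _; rewrite !mxE.
cxring.
Qed.

Lemma crC n (u w : 'cV[C]_n) : cr w u = conjc (cr u w).
Proof.
rewrite /cr; apply: cxP; rewrite ?cReJ ?cImJ ?ReSum ?ImSum -?sumrN;
  apply: eq_bigr => i _; cxsimp; ring.
Qed.

Lemma cr_selfIm n (u : 'cV[C]_n) : CIm (cr u u) = 0.
Proof.
rewrite /cr ImSum big1 // => i _; cxsimp; ring.
Qed.

Lemma cr_selfRe n (u : 'cV[C]_n) :
  CRe (cr u u) = \sum_(i < n) (CRe (u i ord0) ^+ 2 + CIm (u i ord0) ^+ 2).
Proof.
rewrite /cr ReSum; apply: eq_bigr => i _; cxsimp; ring.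
Qed.

Lemma cr_selfE n (u : 'cV[C]_n) : cr u u = (CRe (cr u u))%:C%C.
Proof. by apply: cxP; rewrite ?cReC ?cImC // cr_selfIm. Qed.

Lemma cvnorm_sq n (u : 'cV[C]_n) : cvnorm u ^+ 2 = CRe (cr u u).
Proof.
rewrite /cvnorm sqr_sqrtr ?cr_selfRe //.
by apply: sumr_ge0 => i _; rewrite addr_ge0 // sqr_ge0.
Qed.

Lemma cvnorm_ge0 n (u : 'cV[C]_n) : 0 <= cvnorm u.
Proof. exact: sqrtr_ge0. Qed.

Lemma cr_self_ge0 n (u : 'cV[C]_n) : 0 <= CRe (cr u u).
Proof. by rewrite -cvnorm_sq sqr_ge0. Qed.

Lemma cr_eq0 n (u : 'cV[C]_n) : CRe (cr u u) = 0 -> u = 0.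
Proof.
rewrite cr_selfRe => /psumr_eq0P H; apply/matrixP => i j.
rewrite (ord1 j) mxE.
have := H (fun i _ => addr_ge0 (sqr_ge0 _) (sqr_ge0 _)) i isT.
move: (u i ord0) => [a b] /= /eqP.
by rewrite paddr_eq0 ?sqr_ge0 // !sqrf_eq0 => /andP[/eqP -> /eqP ->].
Qed.

Lemma expand2 n (P Q : 'M[C]_n) (e1 e2 : 'cV[C]_n) a b :
  cr (P *m (a *: e1 + b *: e2)) (Q *m (a *: e1 + b *: e2)) =
  conjc a * a * cr (P *m e1) (Q *m e1) + conjc a * b * cr (P *m e1) (Q *m e2)
  + conjc b * a * cr (P *m e2) (Q *m e1) + conjc b * b * cr (P *m e2) (Q *m e2).
Proof.
rewrite !mulmxDr -!scalemxAr crDl !crDr; ring.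
Qed.

End Alg.

Set Implicit Arguments.
Unset Strict Implicit.


Section Sphere.
Variable R : realType.

Lemma kernel3 (a1 a2 a3 b1 b2 b3 : R) : exists d1 d2 d3 : R,
  0 < d1^+2 + d2^+2 + d3^+2 /\ a1*d1 + a2*d2 + a3*d3 = 0 /\ b1*d1 + b2*d2 + b3*d3 = 0.
Proof.
set c1 := a2*b3 - a3*b2; set c2 := a3*b1 - a1*b3; set c3 := a1*b2 - a2*b1.
have [hc|hc] := ltP 0 (c1^+2 + c2^+2 + c3^+2).
  by exists c1, c2, c3; split => //; rewrite /c1 /c2 /c3; split; ring.
have e1 : c1 = 0 by nra.
have e2 : c2 = 0 by nra.
have e3 : c3 = 0 by nra.
have [h1|h1] := ltP 0 (a2^+2 + a3^+2).
  exists 0, a3, (-a2); split; first nra.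
  by split; [ring|]; move: e1; rewrite /c1 => e; nra.
have [h2|h2] := ltP 0 (a1^+2 + a3^+2).
  exists (-a3), 0, a1; split; first nra.
  by split; [ring|]; move: e2; rewrite /c2 => e; nra.
have [h3|h3] := ltP 0 (a1^+2 + a2^+2).
  exists a2, (-a1), 0; split; first nra.
  by split; [ring|]; move: e3; rewrite /c3 => e; nra.
have z1 : a1 = 0 by nra.
have z2 : a2 = 0 by nra.
have z3 : a3 = 0 by nra.
rewrite z1 z2 z3.
have [h4|h4] := ltP 0 (b2^+2 + b3^+2).
  by exists 0, b3, (-b2); split; first nra; split; ring.
have [h5|h5] := ltP 0 (b1^+2 + b3^+2).
  by exists (-b3), 0, b1; split; first nra; split; ring.
have [h6|h6] := ltP 0 (b1^+2 + b2^+2).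
  by exists b2, (-b1), 0; split; first nra; split; ring.
exists 1, 0, 0; split; first nra.
split; first ring. nra.
Qed.

Lemma sphere_lin (a1 a2 a3 b1 b2 b3 c1 c2 c3 u1 u2 u3 : R) :
  u1^+2 + u2^+2 + u3^+2 <= 1 -> exists v1 v2 v3 : R,
  v1^+2 + v2^+2 + v3^+2 = 1 /\ a1*v1 + a2*v2 + a3*v3 = a1*u1 + a2*u2 + a3*u3
  /\ b1*v1 + b2*v2 + b3*v3 = b1*u1 + b2*u2 + b3*u3
  /\ c1*u1 + c2*u2 + c3*u3 <= c1*v1 + c2*v2 + c3*v3.
Proof.
move=> hu.
have [d1 [d2 [d3 [hd [ha hb]]]]] := kernel3 a1 a2 a3 b1 b2 b3.
set D := d1^+2 + d2^+2 + d3^+2.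
set B := u1*d1 + u2*d2 + u3*d3.
set Cc := u1^+2 + u2^+2 + u3^+2 - 1.
have hdisc : 0 <= B^+2 - D * Cc.
  have : 0 <= D * (- Cc) by apply: mulr_ge0; [exact: ltW | rewrite /Cc; lra].
  have := sqr_ge0 B; lra.
set sq := Num.sqrt (B^+2 - D * Cc).
have sq0 : 0 <= sq by apply: sqrtr_ge0.
have sq2 : sq^+2 = B^+2 - D * Cc by rewrite sqr_sqrtr.
have hD : D != 0 by rewrite gt_eqF.
have key : forall s, D * s^+2 + 2 * B * s + Cc = 0 ->
  exists v1 v2 v3 : R, v1^+2 + v2^+2 + v3^+2 = 1 /\ a1*v1 + a2*v2 + a3*v3 = a1*u1 + a2*u2 + a3*u3
  /\ b1*v1 + b2*v2 + b3*v3 = b1*u1 + b2*u2 + b3*u3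
  /\ c1*v1 + c2*v2 + c3*v3 = c1*u1 + c2*u2 + c3*u3 + s * (c1*d1 + c2*d2 + c3*d3).
  move=> s hs; exists (u1 + s*d1), (u2 + s*d2), (u3 + s*d3); split.
    by transitivity (D * s^+2 + 2 * B * s + Cc + 1); [rewrite /D /B /Cc; ring | rewrite hs add0r].
  split; first by rewrite -[RHS]addr0 -(mulr0 s) -ha; ring.
  split; first by rewrite -[RHS]addr0 -(mulr0 s) -hb; ring.
  ring.
have hDC : 0 <= D * (- Cc) by apply: mulr_ge0; [exact: ltW | rewrite /Cc; lra].
have hp : 0 <= sq - B by nra.
have hm : 0 <= sq + B by nra.
have root : forall e : R, e ^+ 2 = 1 -> D * ((- B + e * sq) / D)^+2 + 2 * B * ((- B + e * sq) / D) + Cc = 0.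
  move=> e he.
  transitivity ((e^+2 * sq^+2 - B^+2 + D * Cc) / D); first by field.
  by rewrite he mul1r sq2 (_ : B^+2 - D*Cc - B^+2 + D*Cc = 0) ?mul0r //; ring.
have [hc|hc] := leP 0 (c1*d1 + c2*d2 + c3*d3).
  have [v1 [v2 [v3 [h1 [h2 [h3 h4]]]]]] := key ((- B + 1 * sq) / D) (root 1 (expr1n _ _)).
  exists v1, v2, v3; do 3!split => //; rewrite h4 lerDl; apply: mulr_ge0 => //.
  by apply: divr_ge0; [lra | exact: ltW].
have [v1 [v2 [v3 [h1 [h2 [h3 h4]]]]]] := key ((- B + (-1) * sq) / D) (root (-1) ltac:(by rewrite sqrrN expr1n)).
exists v1, v2, v3; do 3!split => //; rewrite h4 lerDl; apply: mulr_le0; last exact: ltW.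
by rewrite mulr_le0_ge0 //; [lra | rewrite invr_ge0; exact: ltW].
Qed.
End Sphere.

Section Bloch.
Variable R : realType.
Local Notation C := (R[i]).

Definition affine3 (F : R -> R -> R -> R) := forall v1 v2 v3,
  F v1 v2 v3 = F 0 0 0 + v1 * (F 1 0 0 - F 0 0 0) + v2 * (F 0 1 0 - F 0 0 0)
    + v3 * (F 0 0 1 - F 0 0 0).

Lemma sphere_fun (F1 F2 F3 : R -> R -> R -> R) u1 u2 u3 :
  affine3 F1 -> affine3 F2 -> affine3 F3 -> u1^+2 + u2^+2 + u3^+2 <= 1 ->
  exists v1 v2 v3, v1^+2 + v2^+2 + v3^+2 = 1 /\ F1 v1 v2 v3 = F1 u1 u2 u3 /\
    F2 v1 v2 v3 = F2 u1 u2 u3 /\ F3 u1 u2 u3 <= F3 v1 v2 v3.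
Proof.
move=> h1 h2 h3 hu.
have [v1 [v2 [v3 [hv [e1 [e2 e3]]]]]] := sphere_lin
  (F1 1 0 0 - F1 0 0 0) (F1 0 1 0 - F1 0 0 0) (F1 0 0 1 - F1 0 0 0)
  (F2 1 0 0 - F2 0 0 0) (F2 0 1 0 - F2 0 0 0) (F2 0 0 1 - F2 0 0 0)
  (F3 1 0 0 - F3 0 0 0) (F3 0 1 0 - F3 0 0 0) (F3 0 0 1 - F3 0 0 0) hu.
exists v1, v2, v3; split => //.
rewrite (h1 v1) (h1 u1) (h2 v1) (h2 u1) (h3 v1) (h3 u1).
split; first lra. split; first lra. lra.
Qed.

Lemma affine_comb (F : R -> R -> R -> R) t x1 x2 x3 y1 y2 y3 : affine3 F ->
  F ((1-t)*x1 + t*y1) ((1-t)*x2 + t*y2) ((1-t)*x3 + t*y3) =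
  (1-t) * F x1 x2 x3 + t * F y1 y2 y3.
Proof. by move=> h; rewrite h (h x1) (h y1); ring. Qed.

Definition bv1 (a b : C) := 2 * CRe (conjc a * b).
Definition bv2 (a b : C) := 2 * CIm (conjc a * b).
Definition bv3 (a b : C) := CRe (conjc a * a) - CRe (conjc b * b).
Definition bs (a b : C) := CRe (conjc a * a) + CRe (conjc b * b).

Definition Gv (s v1 v2 v3 : R) (m11 m12 m21 m22 : C) : C :=
  ((s + v3) / 2)%:C%C * m11 + (cxm (v1 / 2) (v2 / 2)) * m12
  + (cxm (v1 / 2) (- (v2 / 2))) * m21 + ((s - v3) / 2)%:C%C * m22.

Lemma G_bloch a b m11 m12 m21 m22 :
  conjc a * a * m11 + conjc a * b * m12 + conjc b * a * m21 + conjc b * b * m22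
  = Gv (bs a b) (bv1 a b) (bv2 a b) (bv3 a b) m11 m12 m21 m22.
Proof.
 rewrite /Gv /bs /bv1 /bv2 /bv3; apply: cxP; cxsimp. all: by field. Qed.

Lemma bv_sphere a b : bv1 a b ^+ 2 + bv2 a b ^+ 2 + bv3 a b ^+ 2 = bs a b ^+ 2.
Proof. rewrite /bs /bv1 /bv2 /bv3; cxsimp; ring. Qed.

Lemma GvRe_aff s m11 m12 m21 m22 :
  affine3 (fun v1 v2 v3 => CRe (Gv s v1 v2 v3 m11 m12 m21 m22)).
Proof. move=> v1 v2 v3 /=; rewrite /Gv; cxsimp; by field. Qed.

Lemma GvIm_aff s m11 m12 m21 m22 :
  affine3 (fun v1 v2 v3 => CIm (Gv s v1 v2 v3 m11 m12 m21 m22)).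
Proof. move=> v1 v2 v3 /=; rewrite /Gv; cxsimp; by field. Qed.

Lemma bloch_back v1 v2 v3 : v1^+2 + v2^+2 + v3^+2 = 1 ->
  exists a b, bs a b = 1 /\ bv1 a b = v1 /\ bv2 a b = v2 /\ bv3 a b = v3.
Proof.
move=> hv.
have [h3|h3] := eqVneq v3 (-1).
  have e1 : v1 = 0 by nra.
  have e2 : v2 = 0 by nra.
  exists 0, 1; rewrite /bs /bv1 /bv2 /bv3 e1 e2 h3; cxsimp.
  by split; [ring|split; [ring|split; ring]].
have hpos : 0 < 1 + v3.
  have : v3 ^+ 2 <= 1 by nra.
  move=> hle; have : -1 <= v3 by nra.
  rewrite le_eqVlt => /orP[/eqP e|]; first by move: h3; rewrite e eqxx.
  lra.
set al := Num.sqrt ((1 + v3) / 2).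
have al2 : al ^+ 2 = (1 + v3) / 2 by rewrite sqr_sqrtr //; lra.
have al0 : al != 0 by apply/eqP => e; move: al2; rewrite e expr0n /=; lra.
have hn : 1 + v3 != 0 by rewrite gt_eqF.
have E : forall x, x / (2 * al) * (x / (2 * al)) = x^+2 / (2 * (1 + v3)).
  move=> x; have -> : 1 + v3 = 2 * al ^+ 2 by rewrite al2; field.
  by field.
have E2 : al * al = (1 + v3) / 2 by rewrite -expr2.
exists (al%:C)%C, (cxm (v1 / (2 * al)) (v2 / (2 * al))).
rewrite /bs /bv1 /bv2 /bv3; cxsimp.
rewrite !mulNr !opprK !E E2 ?mul0r ?mulr0 ?oppr0 ?subr0 ?addr0.
have -> : v1 ^+ 2 = 1 - v3 ^+ 2 - v2 ^+ 2 by lra.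
split; last split; last split; by field.
Qed.

End Bloch.


Section Main.
Variable R : realType.
Local Notation C := (R[i]).

Lemma crZl n (u w : 'cV[C]_n) a : cr (a *: u) w = conjc a * cr u w.
Proof. by rewrite -[a *: u]addr0 -(scale0r u) (crDl u u w a 0); ring. Qed.
Lemma crZr n (u w : 'cV[C]_n) a : cr u (a *: w) = a * cr u w.
Proof. by rewrite -[a *: w]addr0 -(scale0r w) (crDr w w u a 0); ring. Qed.

Lemma ReComb (a b : R) (X Y : C) : CRe ((a%:C)%C * X + (b%:C)%C * Y) = a * CRe X + b * CRe Y.
Proof. by cxsimp; ring. Qed.
Lemma ImComb (a b : R) (X Y : C) : CIm ((a%:C)%C * X + (b%:C)%C * Y) = a * CIm X + b * CIm Y.
Proof. by cxsimp; ring. Qed.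
Lemma Gv1 (s v1 v2 v3 : R) : Gv s v1 v2 v3 1 0 0 1 = (s%:C)%C.
Proof. rewrite /Gv; apply: cxP; cxsimp; by field. Qed.

Variable n : nat.
Variable A : 'M[C]_n.

Lemma convex_step (x y : 'cV[C]_n) t : cr x x = 1 -> cr y y = 1 -> 0 <= t -> t <= 1 ->
  exists z, cr z z = 1 /\ qform A z = ((1-t)%:C)%C * qform A x + (t%:C)%C * qform A y /\
  (1-t) * CRe (cr (A *m x) (A *m x)) + t * CRe (cr (A *m y) (A *m y))
    <= CRe (cr (A *m z) (A *m z)).
Proof.
move=> hx hy t0 t1.
set g := cr x y.
set y' := y - g *: x.
have hxy' : cr x y' = 0.
  have -> : y' = 1 *: y + (- g) *: x by rewrite scale1r scaleNr.
  by rewrite crDr hx /g; ring.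
have [hb|hb] := eqVneq (CRe (cr y' y')) 0.
  have /eqP : y' = 0 by apply: cr_eq0.
  rewrite subr_eq0 => /eqP ey.
  have gg : conjc g * g = 1 by move: hy; rewrite ey crZl crZr hx mulr1.
  exists x; split => //.
  rewrite ey !qformE -scalemxAr crZl crZr mulrA gg mul1r.
  rewrite crZl crZr mulrA gg mul1r.
  split; first by apply: cxP; cxsimp; ring.
  lra.
have hb0 : 0 < CRe (cr y' y') by rewrite lt_def hb cr_self_ge0.
set b2 := CRe (cr y' y') in hb hb0.
set be := Num.sqrt b2.
have be2 : be ^+ 2 = b2 by rewrite sqr_sqrtr // ltW.
have be0 : be != 0 by apply/eqP => e; move: be2; rewrite e expr0n /= => e'; move: hb0; rewrite -e' ltxx.
set e2 := ((be^-1)%:C)%C *: y'.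
have h12 : cr x e2 = 0 by rewrite crZr hxy' mulr0.
have h21 : cr e2 x = 0 by rewrite crC h12; apply: cxP; cxsimp; ring.
have h22 : cr e2 e2 = 1.
  rewrite crZl crZr cr_selfE -/b2 -be2; apply: cxP; cxsimp; by field.
have hyd : y = g *: x + (be%:C)%C *: e2.
  rewrite /e2 scalerA.
  have -> : (be%:C)%C * (be^-1%:C)%C = 1 by apply: cxP; cxsimp; by field.
  by rewrite scale1r /y' addrC subrK.
have hxd : x = 1 *: x + 0 *: e2 by rewrite scale1r scale0r addr0.
have hq : forall a b, qform A (a *: x + b *: e2) = Gv (bs a b) (bv1 a b) (bv2 a b) (bv3 a b)
   (cr x (A *m x)) (cr x (A *m e2)) (cr e2 (A *m x)) (cr e2 (A *m e2)).
  move=> a b; rewrite qformE {1}(_ : a *: x + b *: e2 = 1 *m (a *: x + b *: e2)); last by rewrite mul1mx.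
  by rewrite expand2 !mul1mx G_bloch.
have hN : forall a b, cr (A *m (a *: x + b *: e2)) (A *m (a *: x + b *: e2)) =
   Gv (bs a b) (bv1 a b) (bv2 a b) (bv3 a b)
   (cr (A *m x) (A *m x)) (cr (A *m x) (A *m e2)) (cr (A *m e2) (A *m x)) (cr (A *m e2) (A *m e2)).
  by move=> a b; rewrite expand2 G_bloch.
have hC : forall a b, cr (a *: x + b *: e2) (a *: x + b *: e2) = ((bs a b)%:C)%C.
  move=> a b; rewrite -[a *: x + b *: e2]mul1mx expand2 !mul1mx hx h12 h21 h22 G_bloch.
  by rewrite Gv1.
have bsx : bs (1 : C) 0 = 1 by rewrite /bs; cxsimp; ring.
have bsy : bs g (be%:C)%C = 1.
  by have := hC g (be%:C)%C; rewrite -hyd hy => /(congr1 CRe); cxsimp.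
have qx : qform A x = Gv 1 (bv1 (1 : C) 0) (bv2 (1 : C) 0) (bv3 (1 : C) 0)
   (cr x (A *m x)) (cr x (A *m e2)) (cr e2 (A *m x)) (cr e2 (A *m e2)).
  by rewrite {1}hxd hq bsx.
have qy : qform A y = Gv 1 (bv1 g (be%:C)%C) (bv2 g (be%:C)%C) (bv3 g (be%:C)%C)
   (cr x (A *m x)) (cr x (A *m e2)) (cr e2 (A *m x)) (cr e2 (A *m e2)).
  by rewrite {1}hyd hq bsy.
have nx : cr (A *m x) (A *m x) = Gv 1 (bv1 (1 : C) 0) (bv2 (1 : C) 0) (bv3 (1 : C) 0)
   (cr (A *m x) (A *m x)) (cr (A *m x) (A *m e2)) (cr (A *m e2) (A *m x)) (cr (A *m e2) (A *m e2)).
  by rewrite {1 2}hxd hN bsx.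
have ny : cr (A *m y) (A *m y) = Gv 1 (bv1 g (be%:C)%C) (bv2 g (be%:C)%C) (bv3 g (be%:C)%C)
   (cr (A *m x) (A *m x)) (cr (A *m x) (A *m e2)) (cr (A *m e2) (A *m x)) (cr (A *m e2) (A *m e2)).
  by rewrite hyd hN bsy.
have sx := bv_sphere (1 : C) 0; rewrite bsx expr1n in sx.
have sy := bv_sphere g (be%:C)%C; rewrite bsy expr1n in sy.
set x1 := bv1 (1 : C) 0 in sx qx nx *; set x2 := bv2 (1 : C) 0 in sx qx nx *;
set x3 := bv3 (1 : C) 0 in sx qx nx *.
set y1 := bv1 g (be%:C)%C in sy qy ny *; set y2 := bv2 g (be%:C)%C in sy qy ny *;
set y3 := bv3 g (be%:C)%C in sy qy ny *.
have hu : ((1-t)*x1 + t*y1)^+2 + ((1-t)*x2 + t*y2)^+2 + ((1-t)*x3 + t*y3)^+2 <= 1.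
  have e : ((1-t)*x1 + t*y1)^+2 + ((1-t)*x2 + t*y2)^+2 + ((1-t)*x3 + t*y3)^+2 =
     1 - t * (1 - t) * ((x1 - y1)^+2 + (x2 - y2)^+2 + (x3 - y3)^+2).
    have E0 : (1 - t) * (x1^+2 + x2^+2 + x3^+2) + t * (y1^+2 + y2^+2 + y3^+2) = 1.
      by rewrite sx sy; ring.
    have E1 : ((1-t)*x1 + t*y1)^+2 + ((1-t)*x2 + t*y2)^+2 + ((1-t)*x3 + t*y3)^+2 -
     (1 - t * (1 - t) * ((x1 - y1)^+2 + (x2 - y2)^+2 + (x3 - y3)^+2)) =
     (1 - t) * (x1^+2 + x2^+2 + x3^+2) + t * (y1^+2 + y2^+2 + y3^+2) - 1 by ring.
    lra.
  rewrite e; have : 0 <= t * (1 - t) * ((x1 - y1)^+2 + (x2 - y2)^+2 + (x3 - y3)^+2).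
    by apply: mulr_ge0; [apply: mulr_ge0; lra | rewrite !addr_ge0 ?sqr_ge0].
  lra.
set m11 := cr x (A *m x) in qx qy *; set m12 := cr x (A *m e2) in qx qy *;
set m21 := cr e2 (A *m x) in qx qy *; set m22 := cr e2 (A *m e2) in qx qy *.
set n11 := cr (A *m x) (A *m x) in nx ny *; set n12 := cr (A *m x) (A *m e2) in nx ny *;
set n21 := cr (A *m e2) (A *m x) in nx ny *; set n22 := cr (A *m e2) (A *m e2) in nx ny *.
have [v1 [v2 [v3 [hv [E1 [E2 E3]]]]]] := sphere_fun (GvRe_aff 1 m11 m12 m21 m22)
   (GvIm_aff 1 m11 m12 m21 m22) (GvRe_aff 1 n11 n12 n21 n22) hu.
rewrite (affine_comb t x1 x2 x3 y1 y2 y3 (GvRe_aff 1 m11 m12 m21 m22)) in E1.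
rewrite (affine_comb t x1 x2 x3 y1 y2 y3 (GvIm_aff 1 m11 m12 m21 m22)) in E2.
rewrite (affine_comb t x1 x2 x3 y1 y2 y3 (GvRe_aff 1 n11 n12 n21 n22)) in E3.
have [a [b [hab [hb1 [hb2 hb3]]]]] := bloch_back hv.
exists (a *: x + b *: e2); split; first by rewrite hC hab.
split.
  rewrite hq hab hb1 hb2 hb3; apply: cxP; rewrite ?ReComb ?ImComb qx qy.
    exact: E1.
  exact: E2.
rewrite -/n11 hN hab hb1 hb2 hb3; rewrite nx ny; exact: E3.
Qed.
End Main.


Section Cont.
Variable R : realType.
Local Notation C := (R[i]).
Variable T : topologicalType.

Lemma rcD (f g : T -> R) : continuous f -> continuous g -> continuous (fun x => f x + g x).
Proof. by move=> hf hg x; apply: continuousD; [exact: hf | exact: hg]. Qed.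
Lemma rcM (f g : T -> R) : continuous f -> continuous g -> continuous (fun x => f x * g x).
Proof. by move=> hf hg x; apply: continuousM; [exact: hf | exact: hg]. Qed.
Lemma rcN (f : T -> R) : continuous f -> continuous (fun x => - f x).
Proof. by move=> hf x; apply: continuousN; exact: hf. Qed.
Lemma rcC (c : R) : continuous (fun _ : T => c).
Proof. exact: cst_continuous. Qed.
Lemma rcS (I : Type) (r : seq I) (F : I -> T -> R) : (forall i, continuous (F i)) ->
  continuous (fun x => \sum_(i <- r) F i x).
Proof.
move=> hF; elim: r => [|i r IH].
  by under eq_fun do rewrite big_nil; exact: rcC.
under eq_fun do rewrite big_cons; exact: rcD.
Qed.

Definition cc (F : T -> C) := continuous (fun v => CRe (F v)) /\ continuous (fun v => CIm (F v)).

Lemma ccD (F G : T -> C) : cc F -> cc G -> cc (fun x => F x + G x).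
Proof.
move=> [h1 h2] [h3 h4]; split.
  by under eq_fun do rewrite cReD; exact: rcD.
by under eq_fun do rewrite cImD; exact: rcD.
Qed.
Lemma ccM (F G : T -> C) : cc F -> cc G -> cc (fun x => F x * G x).
Proof.
move=> [h1 h2] [h3 h4]; split.
  by under eq_fun do rewrite cReM; apply: rcD; [exact: rcM|apply: rcN; exact: rcM].
by under eq_fun do rewrite cImM; apply: rcD; exact: rcM.
Qed.
Lemma ccJ (F : T -> C) : cc F -> cc (fun x => conjc (F x)).
Proof.
move=> [h1 h2]; split.
  by under eq_fun do rewrite cReJ; exact: h1.
by under eq_fun do rewrite cImJ; exact: rcN.
Qed.
Lemma ccC (c : C) : cc (fun _ => c).
Proof. by split; exact: rcC. Qed.
Lemma ccS (I : Type) (r : seq I) (F : I -> T -> C) : (forall i, cc (F i)) ->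
  cc (fun x => \sum_(i <- r) F i x).
Proof.
move=> hF; split.
  under eq_fun do rewrite ReSum; apply: rcS => i; exact: (hF i).1.
under eq_fun do rewrite ImSum; apply: rcS => i; exact: (hF i).2.
Qed.
End Cont.

Section Fin.
Variable R : realType.
Local Notation C := (R[i]).
Variable n : nat.

Definition vec (v : 'rV[R]_(n + n)) : 'cV[C]_n :=
  \col_i cxm (v ord0 (lshift n i)) (v ord0 (rshift n i)).

Definition unvec (x : 'cV[C]_n) : 'rV[R]_(n + n) :=
  \row_j match fintype.split j with inl i => CRe (x i ord0) | inr i => CIm (x i ord0) end.

Lemma unvecK x : vec (unvec x) = x.
Proof.
apply/matrixP => i j; rewrite (ord1 j) !mxE.
rewrite (unsplitK (inl i)) (unsplitK (inr i)).
by apply: cxP; rewrite ?Recxm ?Imcxm.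
Qed.

Lemma cc_vec i : cc (fun v : 'rV[R]_(n + n) => vec v i ord0).
Proof.
split.
  under eq_fun do rewrite mxE Recxm; exact: coord_continuous.
under eq_fun do rewrite mxE Imcxm; exact: coord_continuous.
Qed.

Lemma cc_cr (P Q : 'M[C]_n) :
  cc (fun v : 'rV[R]_(n + n) => cr (P *m vec v) (Q *m vec v)).
Proof.
rewrite /cr; apply: ccS => i; apply: ccM; first apply: ccJ.
  under eq_fun do rewrite mxE; apply: ccS => j; apply: ccM; [exact: ccC | exact: cc_vec].
under eq_fun do rewrite mxE; apply: ccS => j; apply: ccM; [exact: ccC | exact: cc_vec].
Qed.

End Fin.


Lemma cvnorm1 (R : realType) n (x : 'cV[R[i]]_n) : cvnorm x = 1 <-> cr x x = 1.
Proof.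
split=> h.
  by rewrite cr_selfE -cvnorm_sq h expr1n.
have e : cvnorm x ^+ 2 = 1 by rewrite cvnorm_sq h.
have := cvnorm_ge0 x; nra.
Qed.

Lemma W_geP (R : realType) n (A : 'M[R[i]]_n) r pq : W_ge A r pq <->
  exists x, cr x x = 1 /\ pq = (CRe (qform A x), CIm (qform A x)) /\ r <= cvnorm (A *m x).
Proof.
split.
  case=> h [rh [x [/cvnorm1 hx e]]]; exists x; split => //.
  case: pq e => p q /= [-> -> eh]; split => //.
  have c0 := cvnorm_ge0 (A *m x).
  have [h0|h0] := leP h 0; first lra.
  nra.
case=> x [hx [-> rx]]; exists (cvnorm (A *m x)); split => //.
by exists x; split => //; apply/cvnorm1.
Qed.


Unset Implicit Arguments.
Set Strict Implicit.

Theorem proposition1 (R : realType) (n : nat) (A : 'M[R[i]]_n) (r : R) :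
  compact (W_ge A r) /\ convex2 (W_ge A r).
Proof.
split; last first.
  move=> [p1 q1] [p2 q2] t /W_geP [x [hx [[-> ->] rx]]] /W_geP [y [hy [[-> ->] ry]]] t0 t1.
  have [z [hz [hq hn]]] := convex_step A hx hy t0 t1.
  apply/W_geP; exists z; split => //; split; first by rewrite hq ReComb ImComb.
  rewrite -!cvnorm_sq in hn.
  have cz := cvnorm_ge0 (A *m z).
  have cx := cvnorm_ge0 (A *m x).
  have cy := cvnorm_ge0 (A *m y).
  have [h0|h0] := leP r 0; first lra.
  have : r ^+ 2 <= cvnorm (A *m x) ^+ 2 by nra.
  have : r ^+ 2 <= cvnorm (A *m y) ^+ 2 by nra.
  nra.
pose S := fun v : 'rV[R]_(n + n) => CRe (cr (1 *m vec v) (1 *m vec v)).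
pose N := fun v : 'rV[R]_(n + n) => CRe (cr (A *m vec v) (A *m vec v)).
pose K := [set v | S v = 1 /\ (r <= 0 \/ r ^+ 2 <= N v)].
pose f := fun v : 'rV[R]_(n + n) =>
  (CRe (cr (1 *m vec v) (A *m vec v)), CIm (cr (1 *m vec v) (A *m vec v))).
have eW : W_ge A r = f @` K.
  rewrite eqEsubset; split.
    move=> pq /W_geP [x [hx [-> rx]]]; exists (unvec x).
      rewrite /K /S /N /= unvecK mul1mx hx; split => //.
      have [h|h] := leP r 0; [by left | right].
      rewrite -cvnorm_sq; have := cvnorm_ge0 (A *m x); nra.
    by rewrite /f unvecK mul1mx qformE.
  move=> pq [v [hS hr] <-]; apply/W_geP; exists (vec v); split.
    by rewrite cr_selfE; move: hS; rewrite /S mul1mx => ->.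
  split; first by rewrite /f mul1mx qformE.
  have c0 := cvnorm_ge0 (A *m vec v).
  case: hr => [h|]; first lra.
  rewrite /N -cvnorm_sq => h.
  have [h0|h0] := leP r 0; first lra.
  nra.
rewrite eW; apply: continuous_compact.
  apply: (@continuous_subspaceT _ _ K f) => v; rewrite /continuous_at /f /=; apply: (@cvg_pair _ _ _ _ (nbhs (CRe (cr (1 *m vec v) (A *m vec v)))) (nbhs (CIm (cr (1 *m vec v) (A *m vec v))))).  
    exact: nbhs_filter.
    exact: ((cc_cr 1 A).1 v).
  exact: ((cc_cr 1 A).2 v).
have hcube := @rV_compact _ (n + n) (fun _ => `[(-1 : R), 1]%classic) (fun _ => @segment_compact R (-1) 1).
apply: (subclosed_compact _ hcube).
  have eK : K = [set v | S v = 1] `&` [set v | r <= 0 \/ r ^+ 2 <= N v] by [].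
  rewrite eK; apply: closedI.
    apply: (preimage_closed (f := S) (D := [set x | x = 1])); last exact: closed_eq.
    by move=> v _; exact: ((cc_cr 1 1).1 v).
  have [h|h] := leP r 0.
    have -> : [set v | true \/ r ^+ 2 <= N v] = setT.
      by apply/seteqP; split => v //= _; left.
    exact: closedT.
  have -> : [set v | false \/ r ^+ 2 <= N v] = N @^-1` [set x | r ^+ 2 <= x].
    apply/seteqP; split => v /=; first by case => //; lra.
    by move=> ?; right.
  apply: preimage_closed; last exact: closed_ge.
  by move=> v _; exact: ((cc_cr A A).1 v).
move=> v [hS _] j.
have eS : S v = \sum_(k < n + n) v ord0 k ^+ 2.
  rewrite /S mul1mx cr_selfRe big_split_ord /= -big_split /=.
  by apply: eq_bigr => i _; rewrite !mxE Recxm Imcxm.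
have hj : v ord0 j ^+ 2 <= 1.
  rewrite -hS eS (bigD1 j) //= lerDl.
  by apply: sumr_ge0 => k _; exact: sqr_ge0.
rewrite set_itvcc /=; apply/andP; split; nra.
Qed.
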